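(* Let $\psi,\chi,\theta>0$ and $q\in(0,1)$. Let $N$ be mixed Poisson, $N\sim\mathrm{Poisson}(\Lambda)$ with $\Lambda\sim\mathrm{GIG}(\psi,\chi,\theta)$, and let $X_1,X_2,\dots$ be independent copies of $X\sim\mathrm{Geo}(1,q)$, independent of $N$; let $L=X_1+\dots+X_N$. Then $a_n=\mathbb{P}[L=n]$ satisfies \[ a_n\sim C\,\chi^{-\theta/2}D^{-\theta}(2n)^{\theta-1}z_1^{-n}\qquad(n\to\infty), \] where \[ C=\frac{\psi^{\theta/2}}{K_\theta(\sqrt{\chi\psi})},\qquad z_1=\frac{1}{1-\psi q/(2+\psi)},\qquad D=\frac{(2+\psi)(2+\psi(1-q))}{2q}. \]
   Context: $\mathrm{GIG}(\psi,\chi,\theta)$ is the generalized inverse Gaussian distribution; for $N\sim\mathrm{Poisson}(\Lambda)$ with such $\Lambda$ the probability generating function of $N$ is \[ \varphi_N(z)=\frac{\psi^{\theta/2}}{K_\theta(\sqrt{\psi\chi})}(\psi+2-2z)^{-\theta/2}K_\theta\big(\sqrt{\chi(\psi+2-2z)}\big), \] where $K_\theta$ is the modified Bessel function of the second kind. $\mathrm{Geo}(1,q)$ is the shifted geometric distribution $\mathbb{P}[X=k]=q(1-q)^{k-1}$, $k\ge1$, with probability generating function $\varphi_X(z)=\frac{qz}{1-(1-q)z}$. The probability generating function of $L$ is $\varphi_N(\varphi_X(z))$. *)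

(* Defs.v *)
From Stdlib Require Import Reals Factorial.
From Coquelicot Require Import Coquelicot.
Open Scope R_scope.

Definition int_0_inf (f : R -> R) : R :=
  RInt_gen f (at_right 0) (Rbar_locally p_infty).

(* Modified Bessel function of the second kind, via its standard integral
   representation  K_th(x) = 1/2 * int_0^oo t^(th-1) exp(-x (t + 1/t)/2) dt
   (valid for x > 0). *)
Definition besselK (th x : R) : R :=
  int_0_inf (fun t => / 2 * Rpower t (th - 1) * exp (- x * (t + / t) / 2)).

Definition gig_density (psi chi th x : R) : R :=
  Rpower (psi / chi) (th / 2) / (2 * besselK th (sqrt (psi * chi)))
  * Rpower x (th - 1) * exp (- (chi / x + psi * x) / 2).

Definition mixed_poisson_pmf (psi chi th : R) (k : nat) : R :=
  int_0_inf (fun l => gig_density psi chi th l * (exp (- l) * l ^ k / INR (fact k))).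

(* P[X = k] for X ~ Geo(1, q) (shifted geometric on {1,2,...}). *)
Definition geo_pmf (q : R) (k : nat) : R :=
  match k with
  | O => 0
  | S j => q * (1 - q) ^ j
  end.

Fixpoint geo_sum_pmf (q : R) (k n : nat) : R :=
  match k with
  | O => if Nat.eqb n 0 then 1 else 0
  | S k' => sum_f_R0 (fun j => geo_pmf q j * geo_sum_pmf q k' (n - j)) n
  end.

(* a_n = P[L = n], L = X_1 + ... + X_N with N independent of the i.i.d. X_i:
   law of total probability over the value of N. *)
Definition compound_pmf (psi chi th q : R) (n : nat) : R :=
  Series (fun k => mixed_poisson_pmf psi chi th k * geo_sum_pmf q k n).

(* Main.v *)
Require Import Defs.
From Stdlib Require Import Reals.
From Coquelicot Require Import Coquelicot.
From Stdlib Require Import Lra Lia Factorial.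
Open Scope R_scope.

Notation F0 := (at_right 0).
Notation Finf := (Rbar_locally p_infty).

Definition cpos (f : R -> R) := forall x, 0 < x -> continuous f x.

Lemma ex_RInt_pos (f : R -> R) a b :
  cpos f -> 0 < a -> 0 < b -> ex_RInt f a b.
Proof.
  intros Hf Ha Hb. apply (@ex_RInt_continuous R_CompleteNormedModule). intros z Hz.
  apply Hf. destruct Hz as [Hz _]. apply Rlt_le_trans with (2 := Hz).
  apply Rmin_case; auto.
Qed.

Lemma fp_ex (P : R * R -> Prop) :
  filter_prod F0 Finf P -> exists a b, 0 < a < 1 /\ 1 < b /\ P (a, b).
Proof.
  intros HP.
  assert (H : filter_prod F0 Finf (fun ab => (0 < fst ab < 1 /\ 1 < snd ab) /\ P ab)).
  { apply filter_and; [|exact HP].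
    apply Filter_prod with (fun x => 0 < x < 1) (fun y => 1 < y).
    - exists (mkposreal 1 Rlt_0_1). intros y Hy Hy0. split; auto.
      unfold ball in Hy; simpl in Hy; unfold AbsRing_ball, abs, minus, plus, opp in Hy; simpl in Hy.
      rewrite Ropp_0, Rplus_0_r in Hy. apply Rabs_def2 in Hy. lra.
    - exists 1. auto.
    - intros x y Hx Hy; simpl; auto. }
  destruct (Hierarchy.filter_ex _ H) as [[a b] [[Ha Hb] HP']].
  exists a, b. simpl in *. auto.
Qed.

Lemma fp_box (a0 b0 : R) : 0 < a0 ->
  filter_prod F0 Finf (fun ab => 0 < fst ab < a0 /\ b0 < snd ab).
Proof.
  intros Ha0.
  apply Filter_prod with (fun x => 0 < x < a0) (fun y => b0 < y).
  - exists (mkposreal a0 Ha0). intros y Hy Hy0. split; auto.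
    unfold ball in Hy; simpl in Hy; unfold AbsRing_ball, abs, minus, plus, opp in Hy; simpl in Hy.
    rewrite Ropp_0, Rplus_0_r in Hy. apply Rabs_def2 in Hy. lra.
  - exists b0. auto.
  - intros x y Hx Hy; simpl; auto.
Qed.

Lemma RInt_mono_int (f : R -> R) a b a' b' :
  cpos f -> (forall x, 0 < x -> 0 <= f x) -> 0 < a' -> a' <= a -> a <= b -> b <= b' ->
  RInt f a b <= RInt f a' b'.
Proof.
  intros Hf Hp Ha' H1 H2 H3.
  assert (E1 : ex_RInt f a' a) by (apply ex_RInt_pos; auto; lra).
  assert (E2 : ex_RInt f a b) by (apply ex_RInt_pos; auto; lra).
  assert (E3 : ex_RInt f b b') by (apply ex_RInt_pos; auto; lra).
  assert (E4 : ex_RInt f a' b) by (apply ex_RInt_pos; auto; lra).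
  rewrite <- (RInt_Chasles f a' b b') by auto.
  rewrite <- (RInt_Chasles f a' a b) by auto.
  assert (0 <= RInt f a' a) by (apply RInt_ge_0; auto; intros; apply Hp; lra).
  assert (0 <= RInt f b b') by (apply RInt_ge_0; auto; intros; apply Hp; lra).
  change plus with Rplus. lra.
Qed.

Lemma ball_abs (l e v : R) : ball l e v <-> Rabs (v - l) < e.
Proof.
  unfold ball; simpl; unfold AbsRing_ball, abs, minus, plus, opp; simpl. tauto.
Qed.

Lemma RInt_le_gen (g : R -> R) lg a b :
  cpos g -> (forall x, 0 < x -> 0 <= g x) ->
  is_RInt_gen g F0 Finf lg -> 0 < a -> a <= b -> RInt g a b <= lg.
Proof.
  intros Hc Hp Hg Ha Hab.
  destruct (Rle_or_lt (RInt g a b) lg) as [|Hlt]; auto. exfalso.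
  set (e := (RInt g a b - lg) / 2).
  assert (He : 0 < e) by (unfold e; lra).
  assert (H := Hg (ball lg (mkposreal e He)) (locally_ball _ _)).
  unfold filtermapi in H; simpl in H.
  destruct (fp_ex _ (filter_and _ _ H (fp_box a b Ha))) as [a' [b' [_ [_ [[y [Hy1 Hy2]] [Ha' Hb']]]]]].
  simpl in *. apply ball_abs in Hy2. simpl in Hy2.
  apply (@is_RInt_unique R_CompleteNormedModule) in Hy1.
  assert (RInt g a b <= RInt g a' b') by (apply RInt_mono_int; auto; lra).
  apply Rabs_def2 in Hy2. unfold e in *. unfold minus, plus, opp in *; simpl in *. lra.
Qed.

Lemma ig_exists (f : R -> R) (M : R) :
  cpos f -> (forall x, 0 < x -> 0 <= f x) ->
  (forall a b, 0 < a -> a <= b -> RInt f a b <= M) ->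
  exists L, is_RInt_gen f F0 Finf L /\ 0 <= L <= M.
Proof.
  intros Hc Hp HM.
  set (E := fun y => exists a b, 0 < a /\ a <= b /\ y = RInt f a b).
  assert (HB : bound E).
  { exists M. intros y [a [b [Ha [Hab ->]]]]. auto. }
  assert (HE : exists x, E x).
  { exists (RInt f 1 1). exists 1, 1. repeat split; lra. }
  destruct (completeness E HB HE) as [L [HL1 HL2]].
  assert (H0 : E 0).
  { exists 1, 1. repeat split; try lra. rewrite RInt_point. reflexivity. }
  exists L. split.
  2: { split. apply HL1; auto. apply HL2. intros y [a [b [Ha [Hab ->]]]]. auto. }
  intros P [eps Heps]. unfold filtermapi.
  assert (Hex : exists a b, 0 < a /\ a <= b /\ L - eps < RInt f a b).
  { apply Classical_Prop.NNPP. intros Hn.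
    assert (L <= L - eps).
    { apply HL2. intros y [a [b [Ha [Hab ->]]]].
      destruct (Rle_or_lt (RInt f a b) (L - eps)) as [|Hl]; auto.
      exfalso; apply Hn; exists a, b; auto. }
    destruct eps; simpl in *; lra. }
  destruct Hex as [a0 [b0 [Ha0 [Hab0 Hlt]]]].
  eapply filter_imp. 2: exact (fp_box a0 b0 Ha0).
  intros [x y] [Hx Hy]; simpl in *.
  exists (RInt f x y). split.
  { apply (@RInt_correct R_CompleteNormedModule). apply ex_RInt_pos; auto; lra. }
  apply Heps. apply ball_abs.
  assert (RInt f a0 b0 <= RInt f x y) by (apply RInt_mono_int; auto; lra).
  assert (RInt f x y <= L) by (apply HL1; exists x, y; repeat split; auto; lra).
  apply Rabs_def1; destruct eps; simpl in *; lra.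
Qed.

Lemma ig_dom (f g : R -> R) lg :
  cpos f -> cpos g -> (forall x, 0 < x -> 0 <= f x <= g x) ->
  is_RInt_gen g F0 Finf lg ->
  exists L, is_RInt_gen f F0 Finf L /\ 0 <= L <= lg.
Proof.
  intros Hf Hg Hfg HG. apply ig_exists; auto.
  - intros; apply Hfg; auto.
  - intros a b Ha Hab.
    apply Rle_trans with (RInt g a b).
    + apply RInt_le; auto; try (apply ex_RInt_pos; auto; lra).
      intros; apply Hfg; lra.
    + apply RInt_le_gen; auto. intros x Hx; specialize (Hfg x Hx); lra.
Qed.

Lemma ig_le (f g : R -> R) lf lg :
  cpos f -> cpos g -> (forall x, 0 < x -> f x <= g x) ->
  is_RInt_gen f F0 Finf lf -> is_RInt_gen g F0 Finf lg -> lf <= lg.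
Proof.
  intros Hf Hg Hfg HF HG.
  destruct (Rle_or_lt lf lg) as [|Hlt]; auto. exfalso.
  set (e := (lf - lg) / 2).
  assert (He : 0 < e) by (unfold e; lra).
  assert (H1 := HF (ball lf (mkposreal e He)) (locally_ball _ _)).
  assert (H2 := HG (ball lg (mkposreal e He)) (locally_ball _ _)).
  unfold filtermapi in H1, H2.
  destruct (fp_ex _ (filter_and _ _ H1 H2)) as [a [b [Ha [Hb [[y1 [Hy1 Hz1]] [y2 [Hy2 Hz2]]]]]]].
  simpl in *. apply ball_abs in Hz1. apply ball_abs in Hz2. simpl in *.
  apply (@is_RInt_unique R_CompleteNormedModule) in Hy1. apply (@is_RInt_unique R_CompleteNormedModule) in Hy2.
  assert (RInt f a b <= RInt g a b).
  { apply RInt_le; try lra; try (apply ex_RInt_pos; auto; lra). intros; apply Hfg; lra. }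
  apply Rabs_def2 in Hz1. apply Rabs_def2 in Hz2. unfold e in *. unfold minus, plus, opp in *; simpl in *. lra.
Qed.

Lemma fp_pos : filter_prod F0 Finf (fun ab => 0 < fst ab /\ 0 < snd ab).
Proof.
  eapply filter_imp. 2: exact (fp_box 1 1 Rlt_0_1).
  intros [a b]; simpl; lra.
Qed.

Lemma ig_ext (f g : R -> R) l :
  (forall x, 0 < x -> f x = g x) -> is_RInt_gen f F0 Finf l -> is_RInt_gen g F0 Finf l.
Proof.
  intros H Hf. apply (is_RInt_gen_ext f g); auto.
  eapply filter_imp. 2: exact fp_pos.
  intros [a b] [Ha Hb] x Hx; simpl in *. apply H.
  destruct Hx as [Hx _]. apply Rle_lt_trans with (2 := Hx). apply Rmin_case; lra.
Qed.

Lemma ig_plus (f g : R -> R) lf lg :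
  is_RInt_gen f F0 Finf lf -> is_RInt_gen g F0 Finf lg ->
  is_RInt_gen (fun x => f x + g x) F0 Finf (lf + lg).
Proof. intros; apply (is_RInt_gen_plus f g lf lg); auto. Qed.

Lemma ig_scal (f : R -> R) c lf :
  is_RInt_gen f F0 Finf lf -> is_RInt_gen (fun x => c * f x) F0 Finf (c * lf).
Proof. intros; apply (is_RInt_gen_scal f c lf); auto. Qed.

Lemma ig_antider (f F : R -> R) la lb :
  (forall x, 0 < x -> is_derive F x (f x)) -> cpos f ->
  filterlim F F0 (locally la) -> filterlim F Finf (locally lb) ->
  is_RInt_gen f F0 Finf (lb - la).
Proof.
  intros HD Hc H0 Hi.
  assert (Hpos : forall a b x, 0 < a -> 0 < b -> Rmin a b <= x <= Rmax a b -> 0 < x).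
  { intros a b x Ha Hb [Hx _]. apply Rlt_le_trans with (2 := Hx). apply Rmin_case; lra. }
  apply ig_ext with (Derive F).
  { intros x Hx. apply is_derive_unique. auto. }
  apply (is_RInt_gen_Derive F la lb); auto.
  - eapply filter_imp. 2: exact fp_pos. intros [a b] [Ha Hb] x Hx; simpl in *.
    eexists. apply HD. exact (Hpos a b x Ha Hb Hx).
  - eapply filter_imp. 2: exact fp_pos. intros [a b] [Ha Hb] x Hx; simpl in *.
    assert (H : 0 < x) by exact (Hpos a b x Ha Hb Hx).
    apply continuous_ext_loc with f.
    + assert (Hl : locally x (fun y => 0 < y)).
      { exists (mkposreal x H). intros y Hy. apply ball_abs in Hy. simpl in Hy.
        apply Rabs_def2 in Hy. unfold minus, plus, opp in *; simpl in *. lra. }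
      eapply filter_imp. 2: exact Hl. intros y Hy. symmetry. apply is_derive_unique. auto.
    + auto.
Qed.

Lemma cont_at_right (F : R -> R) : continuous F 0 -> filterlim F F0 (locally (F 0)).
Proof.
  intros Hc P HP. specialize (Hc P HP).
  unfold filtermap, at_right, within. eapply filter_imp. 2: exact Hc. auto.
Qed.

Fixpoint Fg (a : R) (k : nat) (x : R) : R :=
  match k with
  | O => - exp (-(a*x)) / a
  | S k' => - x^(S k') * exp (-(a*x)) / a + INR (S k') / a * Fg a k' x
  end.

Lemma Fg_der a k x : a <> 0 -> is_derive (Fg a k) x (x^k * exp(-(a*x))).
Proof.
  intros Ha. induction k as [|k IH].
  - simpl. auto_derive; auto. field. auto.
  - simpl Fg.
    set (c := INR (S k) / a).
    assert (H1 : is_derive (fun x => - x^(S k) * exp (-(a*x)) / a) x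
         ((- (INR (S k) * x^k) * exp (-(a*x)) + - (x^(S k)) * (- a * exp (-(a*x)))) / a)).
    { auto_derive; auto. rewrite S_INR. simpl. destruct k; simpl; field; auto. }
    assert (H2 : is_derive (fun y => c * Fg a k y) x (c * (x^k * exp(-(a*x))))).
    { apply (is_derive_scal (Fg a k) x c). exact IH. }
    assert (H3 := is_derive_plus _ _ x _ _ H1 H2).
    replace (x ^ S k * exp (- (a * x))) with
      (((- (INR (S k) * x^k) * exp (-(a*x)) + - (x^(S k)) * (- a * exp (-(a*x)))) / a) + c * (x^k * exp(-(a*x)))).
    + exact H3.
    + unfold c. simpl. field. auto.
Qed.

Lemma Fg_S a k x : Fg a (S k) x = - x^(S k) * exp (-(a*x)) / a + INR (S k) / a * Fg a k x.
Proof. reflexivity. Qed.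

Lemma Fg_0 a k : a <> 0 -> Fg a k 0 = - INR (fact k) / a^(S k).
Proof.
  intros Ha. induction k as [|k IH].
  - simpl. rewrite Rmult_0_r, Ropp_0, exp_0. field. auto.
  - rewrite Fg_S, IH.
    change (fact (S k)) with (S k * fact k)%nat. rewrite mult_INR.
    replace (0 ^ S k) with 0 by (simpl; ring).
    simpl pow. field. split; auto. apply pow_nonzero; auto.
Qed.

Lemma pexp_bound a j x : 0 < a -> 0 < x ->
  0 <= x^j * exp(-(a*x)) <= INR (fact (S j)) / (a^(S j) * x).
Proof.
  intros Ha Hx. split.
  - apply Rmult_le_pos. apply pow_le; lra. left; apply exp_pos.
  - assert (Hax : 0 <= a*x) by nra.
    assert (H := exp_ge_taylor (a*x) (S j) Hax).
    assert (Hterm : (a*x)^(S j) / INR (fact (S j)) <= exp (a*x)).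
    { eapply Rle_trans. 2: exact H. rewrite tech5.
      assert (0 <= sum_f_R0 (fun k => (a*x)^k / INR (fact k)) j).
      { apply cond_pos_sum. intros. apply Rdiv_le_0_compat. apply pow_le; auto.
        apply lt_0_INR, lt_O_fact. }
      lra. }
    rewrite exp_Ropp.
    assert (Hf : 0 < INR (fact (S j))) by apply lt_0_INR, lt_O_fact.
    assert (He : 0 < exp (a*x)) by apply exp_pos.
    apply Rmult_le_reg_r with (exp (a*x) * (a^(S j) * x) / INR (fact (S j))).
    { apply Rdiv_lt_0_compat; auto. apply Rmult_lt_0_compat; auto. apply Rmult_lt_0_compat; auto. apply pow_lt; auto. }
    replace (x ^ j * / exp (a * x) * (exp (a * x) * (a ^ S j * x) / INR (fact (S j))))
      with ((a*x)^(S j) / INR (fact (S j))).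
    2: { rewrite Rpow_mult_distr. rewrite <- !tech_pow_Rmult. field. split; lra. }
    replace (INR (fact (S j)) / (a ^ S j * x) * (exp (a * x) * (a ^ S j * x) / INR (fact (S j))))
      with (exp (a*x)).
    2: { field. repeat split; try lra. apply pow_nonzero; lra. }
    exact Hterm.
Qed.

Lemma pexp_lim a j : 0 < a -> is_lim (fun x => x^j * exp(-(a*x))) p_infty 0.
Proof.
  intros Ha.
  apply is_lim_le_le_loc with (fun _ => 0) (fun x => INR (fact (S j)) / a^(S j) * / x).
  - exists 0. intros x Hx. assert (H := pexp_bound a j x Ha Hx).
    unfold Rdiv in *. rewrite Rinv_mult in H. rewrite Rmult_assoc. exact H.
  - apply is_lim_const.
  - replace (Finite 0) with (Rbar_mult (INR (fact (S j)) / a^(S j)) 0).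
    2: { simpl. rewrite Rmult_0_r. reflexivity. }
    apply is_lim_scal_l. replace (Finite 0) with (Rbar_inv p_infty) by reflexivity.
    apply is_lim_inv. apply is_lim_id. discriminate.
Qed.

Lemma Fg_inf a k : 0 < a -> is_lim (Fg a k) p_infty 0.
Proof.
  intros Ha. induction k as [|k IH].
  - simpl. apply is_lim_ext with (fun x => (-/a) * (x^0 * exp(-(a*x)))).
    { intros; simpl; field; lra. }
    replace (Finite 0) with (Rbar_mult (-/a) 0) by (simpl; f_equal; ring).
    apply is_lim_scal_l. apply pexp_lim; auto.
  - simpl Fg.
    apply is_lim_ext with (fun x => (-/a) * (x^(S k) * exp(-(a*x))) + INR (S k)/a * Fg a k x).
    { intros; simpl; field; lra. }
    replace 0 with ((-/a) * 0 + INR (S k)/a * 0) by ring.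
    apply is_lim_plus'.
    + replace (Finite (-/a * 0)) with (Rbar_mult (-/a) 0) by reflexivity.
      apply is_lim_scal_l. apply pexp_lim; auto.
    + replace (Finite (INR (S k)/a * 0)) with (Rbar_mult (INR (S k)/a) 0) by reflexivity.
      apply is_lim_scal_l. auto.
Qed.

Lemma cpos_pexp a j : cpos (fun x => x^j * exp(-(a*x))).
Proof.
  intros x _. apply (@ex_derive_continuous R_AbsRing R_NormedModule). auto_derive. auto.
Qed.

Lemma gamma_int a k : 0 < a ->
  is_RInt_gen (fun x => x^k * exp(-(a*x))) F0 Finf (INR (fact k) / a^(S k)).
Proof.
  intros Ha.
  replace (INR (fact k) / a^(S k)) with (0 - Fg a k 0).
  2: { rewrite Fg_0 by lra. field. apply pow_nonzero; lra. }
  apply ig_antider with (Fg a k).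
  - intros; apply Fg_der; lra.
  - apply cpos_pexp.
  - apply cont_at_right. apply (@ex_derive_continuous R_AbsRing R_NormedModule). eexists. apply Fg_der; lra.
  - apply (Fg_inf a k Ha).
Qed.

Lemma ln_le_sub1 t : 0 < t -> ln t <= t - 1.
Proof. intros Ht. assert (H := exp_ineq1_le (ln t)). rewrite exp_ln in H; lra. Qed.

Lemma ln_ge_1inv t : 0 < t -> 1 - / t <= ln t.
Proof.
  intros Ht. assert (H := ln_le_sub1 (/ t) (Rinv_0_lt_compat _ Ht)).
  rewrite ln_Rinv in H; lra.
Qed.

Lemma pw_L1 t s : 0 < t -> 0 <= s -> Rpower t s <= exp (s * (t - 1)).
Proof.
  intros Ht Hs. unfold Rpower. destruct (Req_dec s 0) as [->|].
  - rewrite !Rmult_0_l. lra.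
  - apply exp_le_3 || idtac.
    apply Rlt_le in Hs as Hs' || idtac.
    destruct (Rle_lt_or_eq_dec _ _ (ln_le_sub1 t Ht)) as [Hl|Hl].
    + left. apply exp_increasing. apply Rmult_lt_compat_l; lra.
    + rewrite Hl. lra.
Qed.

Lemma pw_L4 t s : 0 < t -> s <= 0 -> exp (s * (t - 1)) <= Rpower t s.
Proof.
  intros Ht Hs. unfold Rpower. assert (H := ln_le_sub1 t Ht).
  destruct (Rle_lt_or_eq_dec _ _ (Rmult_le_compat_neg_l s _ _ Hs H)) as [Hl|Hl].
  - left. apply exp_increasing. lra.
  - rewrite Hl. lra.
Qed.

Lemma pw_L3 t s : 0 < t -> 0 <= s -> 1 + s * (1 - / t) <= Rpower t s.
Proof.
  intros Ht Hs. unfold Rpower. assert (H := ln_ge_1inv t Ht).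
  assert (H1 := exp_ineq1_le (s * ln t)).
  assert (s * (1 - / t) <= s * ln t) by (apply Rmult_le_compat_l; lra). lra.
Qed.

Lemma amgm t a : 0 < t -> 0 < a < 1 -> Rpower t a <= a * t + (1 - a).
Proof.
  intros Ht Ha. set (m := a * t + (1 - a)).
  assert (Hm : 0 < m) by (unfold m; nra).
  assert (H1 := ln_le_sub1 (t / m) (Rdiv_lt_0_compat _ _ Ht Hm)).
  assert (H2 := ln_le_sub1 (/ m) (Rinv_0_lt_compat _ Hm)).
  unfold Rdiv in H1. rewrite ln_mult in H1 by (try apply Rinv_0_lt_compat; lra). rewrite ln_Rinv in H1, H2 by lra.
  assert (Hs : a * (t / m - 1) + (1 - a) * (/ m - 1) = 0).
  { unfold m. field. unfold m in Hm; lra. }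
  assert (a * (ln t - ln m) <= a * (t / m - 1)) by (apply Rmult_le_compat_l; lra).
  assert ((1 - a) * (- ln m) <= (1 - a) * (/ m - 1)) by (apply Rmult_le_compat_l; lra).
  assert (a * ln t <= ln m) by lra.
  unfold Rpower. rewrite <- (exp_ln m) by lra.
  destruct (Rle_lt_or_eq_dec _ _ H3) as [Hl|Hl].
  - left; apply exp_increasing; auto.
  - rewrite Hl; lra.
Qed.

Lemma pw_L2 t s : 0 < t -> -1 < s < 0 -> Rpower t s <= (1 + s) - s / t.
Proof.
  intros Ht Hs.
  assert (H := amgm t (1 + s) Ht ltac:(lra)).
  replace s with ((1 + s) + - (1)) at 1 by ring.
  rewrite Rpower_plus. rewrite Rpower_Ropp, Rpower_1 by auto.
  apply Rmult_le_reg_r with t; auto.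
  rewrite Rmult_assoc, Rinv_l by lra.
  replace ((1 + s - s / t) * t) with ((1 + s) * t + (1 - (1 + s))) by (field; lra).
  lra.
Qed.

Lemma Rpower_pos t s : 0 < Rpower t s.
Proof. apply exp_pos. Qed.

Lemma pw_L5 u g : 0 < u -> 0 < g <= 1 -> 1 - exp (- u) <= Rpower u g.
Proof.
  intros Hu Hg. assert (He := exp_ineq1_le (- u)). assert (Hp := exp_pos (- u)).
  destruct (Rle_or_lt 1 u) as [H1|H1].
  - assert (0 <= ln u) by (destruct (Req_dec u 1) as [->|]; [rewrite ln_1; lra| left; rewrite <- ln_1; apply ln_increasing; lra]).
    assert (H2 := exp_ineq1_le (g * ln u)). unfold Rpower.
    assert (0 <= g * ln u) by (apply Rmult_le_pos; lra). lra.
  - assert (ln u < 0) by (rewrite <- ln_1; apply ln_increasing; lra).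
    assert (ln u <= g * ln u).
    { nra. }
    unfold Rpower. assert (exp (ln u) <= exp (g * ln u)).
    { destruct (Rle_lt_or_eq_dec _ _ H0) as [Hl|Hl]. left; apply exp_increasing; auto. right; f_equal; exact Hl. }
    rewrite exp_ln in H2 by lra. lra.
Qed.

Fixpoint bn (n k : nat) : R :=
  match n, k with
  | _, O => 1
  | O, S _ => 0
  | S n', S k' => bn n' k' + bn n' (S k')
  end.

Lemma bn_n0 n : bn n 0 = 1.
Proof. destruct n; reflexivity. Qed.

Lemma bn_big n k : (n < k)%nat -> bn n k = 0.
Proof.
  revert k; induction n as [|n IH]; intros k Hk.
  - destruct k; [lia|reflexivity].
  - destruct k as [|k]; [lia|]. simpl. rewrite !IH by lia. ring.
Qed.

Lemma bn_C n k : (k <= n)%nat -> bn n k = Binomial.C n k.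
Proof.
  revert k; induction n as [|n IH]; intros k Hk.
  - destruct k; [|lia]. simpl. unfold Binomial.C. simpl. field.
  - destruct k as [|k].
    + simpl. rewrite C_n_0. reflexivity.
    + simpl. destruct (Nat.eq_dec k n) as [->|Hne].
      * rewrite (bn_big n (S n)) by lia. rewrite IH by lia. rewrite !C_n_n. ring.
      * rewrite !IH by lia. apply pascal. lia.
Qed.

Lemma bn_binomial (x y : R) n :
  sum_f_R0 (fun k => bn n k * x^k * y^(n-k)) n = (x + y)^n.
Proof.
  rewrite binomial. apply sum_eq. intros i Hi. rewrite bn_C; auto.
Qed.

Lemma bn_absorb n k : (k <= n)%nat -> bn (S n) (S k) * INR (S k) = INR (S n) * bn n k.
Proof.
  intros Hk. rewrite !bn_C by lia. unfold Binomial.C.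
  replace (S n - S k)%nat with (n - k)%nat by lia.
  change (fact (S n)) with (S n * fact n)%nat. change (fact (S k)) with (S k * fact k)%nat.
  rewrite !mult_INR. field.
  repeat split; try (apply not_0_INR; lia); apply INR_fact_neq_0.
Qed.

Lemma bn_pos n k : 0 <= bn n k.
Proof.
  revert k; induction n as [|n IH]; intros k.
  - destruct k; simpl; lra.
  - destruct k; simpl. lra. specialize (IH k) as H1. specialize (IH (S k)) as H2. lra.
Qed.

Lemma gs_0S q k : geo_sum_pmf q (S k) 0 = 0.
Proof. simpl. ring. Qed.

Lemma gs_k0 q k : geo_sum_pmf q k 0 = match k with O => 1 | S _ => 0 end.
Proof. destruct k. reflexivity. apply gs_0S. Qed.

Lemma gs_O_S q n : geo_sum_pmf q 0 (S n) = 0.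
Proof. reflexivity. Qed.

Lemma gs_rec q k n :
  geo_sum_pmf q (S k) (S (S n)) = q * geo_sum_pmf q k (S n) + (1 - q) * geo_sum_pmf q (S k) (S n).
Proof.
  change (geo_sum_pmf q (S k) (S (S n))) with
    (sum_f_R0 (fun j => geo_pmf q j * geo_sum_pmf q k (S (S n) - j)) (S (S n))).
  change (geo_sum_pmf q (S k) (S n)) with
    (sum_f_R0 (fun j => geo_pmf q j * geo_sum_pmf q k (S n - j)) (S n)).
  rewrite decomp_sum by lia. simpl pred.
  rewrite decomp_sum by lia. simpl pred.
  rewrite (decomp_sum (fun j => geo_pmf q j * geo_sum_pmf q k (S n - j)) (S n)) by lia.
  simpl pred.
  replace (S (S n) - 1)%nat with (S n) by lia.
  assert (E : sum_f_R0 (fun i => geo_pmf q (S (S i)) * geo_sum_pmf q k (S (S n) - S (S i))) n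
            = (1 - q) * sum_f_R0 (fun i => geo_pmf q (S i) * geo_sum_pmf q k (S n - S i)) n).
  { rewrite scal_sum. apply sum_eq. intros i Hi. replace (S (S n) - S (S i))%nat with (S n - S i)%nat by lia.
    simpl. ring. }
  rewrite E. simpl geo_pmf. ring.
Qed.

Lemma gs_closed q k n :
  geo_sum_pmf q (S k) (S n) = bn n k * q^(S k) * (1 - q)^(n - k).
Proof.
  revert k; induction n as [|n IH]; intros k.
  - change (geo_sum_pmf q (S k) 1) with
      (sum_f_R0 (fun j => geo_pmf q j * geo_sum_pmf q k (1 - j)) 1).
    simpl sum_f_R0. simpl geo_pmf. simpl Nat.sub. rewrite gs_k0.
    destruct k; simpl; ring.
  - rewrite gs_rec. rewrite IH. destruct k as [|k].
    + rewrite gs_O_S, !bn_n0. replace (S n - 0)%nat with (S n) by lia.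
      replace (n - 0)%nat with n by lia. simpl. ring.
    + rewrite IH. simpl bn.
      destruct (Compare_dec.le_lt_dec (S k) n) as [Hk|Hk].
      * replace (n - k)%nat with (S (n - S k)) by lia.
        replace (S n - S k)%nat with (S (n - S k)) by lia. simpl. ring.
      * rewrite (bn_big n (S k)) by lia.
        replace (S n - S k)%nat with (n - k)%nat by lia. simpl. ring.
Qed.

Lemma Series_finite (a : nat -> R) N :
  (forall k, (N < k)%nat -> a k = 0) -> Series a = sum_f_R0 a N.
Proof.
  intros H. apply is_series_unique. unfold is_series.
  intros P HP. exists N. intros m Hm.
  rewrite sum_n_Reals.
  assert (E : sum_f_R0 a m = sum_f_R0 a N).
  { induction Hm. reflexivity.
    simpl. rewrite IHHm. rewrite H by lia. ring. }
  rewrite E. apply (locally_singleton _ _ HP).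
Qed.

Lemma compound_sum psi chi th q n :
  compound_pmf psi chi th q (S n) =
  sum_f_R0 (fun k => mixed_poisson_pmf psi chi th (S k) * (bn n k * q^(S k) * (1 - q)^(n - k))) n.
Proof.
  unfold compound_pmf. rewrite (Series_finite _ (S n)).
  - rewrite decomp_sum by lia. simpl pred. rewrite gs_O_S, Rmult_0_r, Rplus_0_l.
    apply sum_eq. intros i Hi. rewrite gs_closed. reflexivity.
  - intros k Hk. destruct k as [|k]; [lia|]. rewrite gs_closed, bn_big by lia. ring.
Qed.

Lemma bsum_gen n p y :
  sum_f_R0 (fun k => bn n k * p^k * (1 - p)^(n - k) * y^(S (S k))) n
  = y^2 * (1 - p + p * y)^n.
Proof.
  replace (1 - p + p * y) with (p * y + (1 - p)) by ring. rewrite <- (bn_binomial (p*y) (1-p)).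
  rewrite scal_sum. apply sum_eq. intros i Hi. rewrite Rpow_mult_distr. simpl. ring.
Qed.

Lemma bsum_inv n p : 0 < p ->
  sum_f_R0 (fun k => bn n k * p^k * (1 - p)^(n - k) / INR (S k)) n
  = (1 - (1 - p)^(S n)) / (INR (S n) * p).
Proof.
  intros Hp.
  assert (H := bn_binomial p (1 - p) (S n)).
  replace (p + (1 - p)) with 1 in H by ring. rewrite pow1 in H.
  rewrite decomp_sum in H by lia. simpl pred in H.
  replace (bn (S n) 0 * p^0 * (1-p)^(S n - 0)) with ((1-p)^(S n)) in H
    by (simpl; ring).
  assert (E : sum_f_R0 (fun i => bn (S n) (S i) * p ^ S i * (1 - p) ^ (S n - S i)) n
             = INR (S n) * p * sum_f_R0 (fun k => bn n k * p^k * (1 - p)^(n - k) / INR (S k)) n).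
  { rewrite scal_sum. apply sum_eq. intros i Hi.
    replace (S n - S i)%nat with (n - i)%nat by lia.
    assert (Hb := bn_absorb n i Hi).
    assert (HS : INR (S i) <> 0) by (apply not_0_INR; lia).
    replace (bn (S n) (S i)) with (INR (S n) * bn n i / INR (S i)) by (rewrite <- Hb; field; auto).
    simpl. field. auto. }
  rewrite E in H.
  assert (HSn : 0 < INR (S n)) by (apply lt_0_INR; lia).
  apply Rmult_eq_reg_l with (INR (S n) * p). 2: nra.
  field_simplify; [|nra]. lra.
Qed.

Section IB.
Variables (s al be : R).
Hypothesis Hs : -1 < s.
Hypothesis Hal : 0 < al.
Hypothesis Hbe : 0 < be.

Definition lin (sg c x : R) := (1 + sg) - sg / (c * x).
Definition exf (sg c x : R) := exp (sg * (c * x - 1)).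

Definition IL (sg c : R) (k : nat) :=
  (1 + sg) * INR (fact (S k)) / al ^ (S (S k)) - sg / c * (INR (fact k) / al ^ (S k)).
Definition IE (sg c : R) (k : nat) :=
  exp (- sg) * (INR (fact (S k)) / (al - sg * c) ^ (S (S k))).

Lemma int_lin sg c k : 0 < c ->
  is_RInt_gen (fun x => x^(S k) * exp (-(al*x)) * lin sg c x) F0 Finf (IL sg c k).
Proof.
  intros Hc. unfold IL.
  apply ig_ext with (fun x => (1 + sg) * (x^(S k) * exp (-(al*x))) + (- (sg / c)) * (x^k * exp (-(al*x)))).
  { intros x Hx. unfold lin. simpl. field. lra. }
  replace ((1 + sg) * INR (fact (S k)) / al ^ S (S k) - sg / c * (INR (fact k) / al ^ S k))
    with ((1 + sg) * (INR (fact (S k)) / al ^ S (S k)) + (- (sg / c)) * (INR (fact k) / al ^ S k))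
    by (field; repeat split; try apply pow_nonzero; lra).
  apply ig_plus; apply ig_scal; apply gamma_int; auto.
Qed.

Lemma int_exf sg c k : 0 < c -> sg * c < al ->
  is_RInt_gen (fun x => x^(S k) * exp (-(al*x)) * exf sg c x) F0 Finf (IE sg c k).
Proof.
  intros Hc Hsc. unfold IE.
  apply ig_ext with (fun x => exp (- sg) * (x^(S k) * exp (-((al - sg * c)*x)))).
  { intros x Hx. unfold exf.
    replace (exp (- ((al - sg * c) * x))) with (exp (-(al*x)) * exp (sg * (c * x - 1)) * exp sg).
    2: { rewrite <- !exp_plus. f_equal. ring. }
    rewrite exp_Ropp. field. apply Rgt_not_eq, exp_pos. }
  apply ig_scal. apply gamma_int. lra.
Qed.

Definition Up (sg x : R) := if Rle_dec 0 sg then exp (sg * (x - 1)) else (1 + sg) - sg / x.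
Definition Lo (sg x : R) := if Rle_dec 0 sg then 1 + sg * (1 - / x) else exp (sg * (x - 1)).

Lemma Up_ge sg x : -1 < sg -> 0 < x -> Rpower x sg <= Up sg x.
Proof.
  intros H Hx. unfold Up. destruct (Rle_dec 0 sg).
  - apply pw_L1; auto.
  - apply pw_L2; auto; lra.
Qed.

Lemma Lo_le sg x : 0 < x -> Lo sg x <= Rpower x sg.
Proof.
  intros Hx. unfold Lo. destruct (Rle_dec 0 sg).
  - apply pw_L3; auto.
  - apply pw_L4; auto; lra.
Qed.

Definition UI (sg c : R) k := if Rle_dec 0 sg then IE sg c k else IL sg c k.
Definition LI (sg c : R) k := if Rle_dec 0 sg then IL sg c k else IE sg c k.

Lemma int_Up sg c k : 0 < c -> sg * c < al ->
  is_RInt_gen (fun x => x^(S k) * exp (-(al*x)) * Up sg (c * x)) F0 Finf (UI sg c k).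
Proof.
  intros Hc Hsc. unfold UI, Up. destruct (Rle_dec 0 sg).
  - apply int_exf; auto.
  - apply ig_ext with (fun x => x^(S k) * exp (-(al*x)) * lin sg c x).
    { intros; reflexivity. } apply int_lin; auto.
Qed.

Lemma int_Lo sg c k : 0 < c -> sg * c < al ->
  is_RInt_gen (fun x => x^(S k) * exp (-(al*x)) * Lo sg (c * x)) F0 Finf (LI sg c k).
Proof.
  intros Hc Hsc. unfold LI, Lo. destruct (Rle_dec 0 sg).
  - apply ig_ext with (fun x => x^(S k) * exp (-(al*x)) * lin sg c x).
    { intros x Hx; unfold lin. f_equal. field. split; lra. } apply int_lin; auto.
  - apply int_exf; auto.
Qed.

End IB.

Section HB.
Variables (s al be : R).
Hypothesis Hs : -1 < s.
Hypothesis Hal : 0 < al.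
Hypothesis Hbe : 0 < be.

Definition gam := (s + 1) / (s + 2).
Definition sgm := s - gam.

Lemma gam_bounds : 0 < gam <= 1.
Proof. unfold gam. split. apply Rdiv_lt_0_compat; lra.
  apply Rmult_le_reg_r with (s + 2). lra. field_simplify; lra. Qed.

Lemma sgm_gt : -1 < sgm.
Proof. unfold sgm, gam.
  assert ((s+1)/(s+2) < s + 1).
  { apply Rmult_lt_reg_r with (s+2). lra. field_simplify; nra. }
  lra. Qed.

Definition hfun (k : nat) (x : R) :=
  x^(S k) * exp (-(al*x)) * (Rpower x s * exp (-(be / x))).

Lemma cpos_hfun k : cpos (hfun k).
Proof.
  intros x Hx. apply (@ex_derive_continuous R_AbsRing R_NormedModule).
  unfold hfun, Rpower. auto_derive. repeat split; lra.
Qed.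

Lemma cpos_Up sg c k : 0 < c -> cpos (fun x => x^(S k) * exp (-(al*x)) * Up sg (c * x)).
Proof.
  intros Hc x Hx. apply (@ex_derive_continuous R_AbsRing R_NormedModule).
  unfold Up. destruct (Rle_dec 0 sg); auto_derive; auto.
  apply Rgt_not_eq. nra.
Qed.

Lemma cpos_Lo sg c k : 0 < c -> cpos (fun x => x^(S k) * exp (-(al*x)) * Lo sg (c * x)).
Proof.
  intros Hc x Hx. apply (@ex_derive_continuous R_AbsRing R_NormedModule).
  unfold Lo. destruct (Rle_dec 0 sg); auto_derive; auto.
  apply Rgt_not_eq. nra.
Qed.

Lemma cpos_scal (f : R -> R) a : cpos f -> cpos (fun x => a * f x).
Proof.
  intros Hf x Hx. apply (@continuous_scal_r R_UniformSpace R_AbsRing R_NormedModule a f x). apply Hf; auto.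
Qed.

Lemma cpos_minus (f g : R -> R) : cpos f -> cpos g -> cpos (fun x => f x - g x).
Proof.
  intros Hf Hg x Hx. apply (@continuous_minus R_UniformSpace R_AbsRing R_NormedModule f g x); auto.
Qed.

Lemma Rpower_split c x : 0 < c -> 0 < x -> Rpower x s = Rpower c (- s) * Rpower (c * x) s.
Proof.
  intros Hc Hx. rewrite <- Rpower_mult_distr by auto. rewrite Rpower_Ropp.
  field. apply Rgt_not_eq, exp_pos.
Qed.

Lemma hfun_upper_pt c k x : 0 < c -> 0 < x ->
  hfun k x <= Rpower c (- s) * (x^(S k) * exp (-(al*x)) * Up s (c * x)).
Proof.
  intros Hc Hx. unfold hfun. rewrite (Rpower_split c x) by auto.
  assert (H1 := Up_ge s (c*x) Hs ltac:(nra)).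
  assert (H2 : exp (-(be/x)) <= 1).
  { rewrite <- exp_0. destruct (Req_dec (be/x) 0).
    - rewrite H, Ropp_0. lra.
    - left. apply exp_increasing. assert (0 < be / x) by (apply Rdiv_lt_0_compat; auto). lra. }
  assert (H3 : 0 <= x^(S k) * exp (-(al*x))) by (apply Rmult_le_pos; [apply pow_le; lra|left; apply exp_pos]).
  assert (H4 : 0 < Rpower c (-s)) by apply exp_pos.
  assert (H5 : 0 < Rpower (c*x) s) by apply exp_pos.
  assert (Rpower c (- s) * Rpower (c * x) s * exp (- (be / x)) <= Rpower c (- s) * Up s (c * x)).
  { apply Rle_trans with (Rpower c (- s) * Rpower (c * x) s * 1).
    - apply Rmult_le_compat_l; nra.
    - rewrite Rmult_1_r. apply Rmult_le_compat_l; lra. }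
  replace (Rpower c (- s) * (x ^ S k * exp (- (al * x)) * Up s (c * x)))
    with (x ^ S k * exp (- (al * x)) * (Rpower c (- s) * Up s (c * x))) by ring.
  apply Rmult_le_compat_l; auto.
Qed.

Lemma hfun_lower_pt c k x : 0 < c -> 0 < x ->
  Rpower c (- s) * (x^(S k) * exp (-(al*x)) * Lo s (c * x)
     - Rpower (be * c) gam * (x^(S k) * exp (-(al*x)) * Up sgm (c * x))) <= hfun k x.
Proof.
  intros Hc Hx. unfold hfun. rewrite (Rpower_split c x) by auto.
  set (t := c * x). assert (Ht : 0 < t) by (unfold t; nra).
  assert (HL := Lo_le s t Ht).
  assert (HU := Up_ge sgm t sgm_gt Ht).
  assert (Hg := gam_bounds).
  assert (H5 := pw_L5 (be / x) gam ltac:(apply Rdiv_lt_0_compat; auto) Hg).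
  assert (Hid : Rpower t s * Rpower (be / x) gam = Rpower (be * c) gam * Rpower t sgm).
  { replace (be / x) with ((be * c) * / t) by (unfold t; field; lra).
    rewrite <- Rpower_mult_distr by (try apply Rinv_0_lt_compat; nra).
    replace (/ t) with (Rpower t (- (1))).
    2: { rewrite Rpower_Ropp, Rpower_1; auto. }
    rewrite Rpower_mult. unfold sgm. replace (s - gam) with (s + (- (1) * gam)) by ring.
    rewrite Rpower_plus. ring. }
  assert (Hts : 0 < Rpower t s) by apply exp_pos.
  assert (Hbg : 0 < Rpower (be * c) gam) by apply exp_pos.
  assert (Hin : Lo s t - Rpower (be * c) gam * Up sgm t <= Rpower t s * exp (- (be / x))).
  { assert (Rpower t s * (1 - exp (- (be / x))) <= Rpower t s * Rpower (be / x) gam)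
      by (apply Rmult_le_compat_l; lra).
    assert (Rpower (be * c) gam * Rpower t sgm <= Rpower (be * c) gam * Up sgm t)
      by (apply Rmult_le_compat_l; lra).
    nra. }
  assert (H3 : 0 <= x^(S k) * exp (-(al*x))) by (apply Rmult_le_pos; [apply pow_le; lra|left; apply exp_pos]).
  assert (H4 : 0 < Rpower c (-s)) by apply exp_pos.
  replace (Rpower c (- s) * (x ^ S k * exp (- (al * x)) * Lo s t -
      Rpower (be * c) gam * (x ^ S k * exp (- (al * x)) * Up sgm t)))
    with (x ^ S k * exp (- (al * x)) * (Rpower c (- s) * (Lo s t - Rpower (be * c) gam * Up sgm t))) by ring.
  replace (x ^ S k * exp (- (al * x)) * (Rpower c (- s) * Rpower t s * exp (- (be / x))))
    with (x ^ S k * exp (- (al * x)) * (Rpower c (- s) * (Rpower t s * exp (- (be / x))))) by ring.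
  apply Rmult_le_compat_l; auto. apply Rmult_le_compat_l; lra.
Qed.

Lemma hfun_pos k x : 0 < x -> 0 <= hfun k x.
Proof.
  intros Hx. unfold hfun. apply Rmult_le_pos.
  apply Rmult_le_pos; [apply pow_le; lra|left; apply exp_pos].
  apply Rmult_le_pos; left; apply exp_pos.
Qed.

Lemma h_exists k : exists v, is_RInt_gen (hfun k) F0 Finf v /\ 0 <= v.
Proof.
  set (c0 := al / (Rabs s + 1)).
  assert (Hc0 : 0 < c0) by (unfold c0; apply Rdiv_lt_0_compat; [lra| assert (0 <= Rabs s) by apply Rabs_pos; lra]).
  assert (Hsc : s * c0 < al).
  { unfold c0. assert (Habs := Rle_abs s). assert (0 <= Rabs s) by apply Rabs_pos.
    apply Rle_lt_trans with (Rabs s * (al / (Rabs s + 1))).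
    - apply Rmult_le_compat_r; auto. left; auto.
    - apply Rmult_lt_reg_r with (Rabs s + 1). lra. field_simplify; lra. }
  destruct (ig_dom (hfun k) (fun x => Rpower c0 (-s) * (x^(S k) * exp (-(al*x)) * Up s (c0 * x)))
             (Rpower c0 (-s) * UI al s c0 k)) as [v [Hv1 Hv2]].
  - apply cpos_hfun.
  - apply cpos_scal, cpos_Up; auto.
  - intros x Hx. split. apply hfun_pos; auto. apply hfun_upper_pt; auto.
  - apply ig_scal. apply int_Up; auto.
  - exists v; split; auto. lra.
Qed.

Lemma h_upper k c v : 0 < c -> s * c < al -> is_RInt_gen (hfun k) F0 Finf v ->
  v <= Rpower c (- s) * UI al s c k.
Proof.
  intros Hc Hsc Hv.
  apply (ig_le (hfun k) (fun x => Rpower c (-s) * (x^(S k) * exp (-(al*x)) * Up s (c * x)))); auto.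
  - apply cpos_hfun.
  - apply cpos_scal, cpos_Up; auto.
  - intros; apply hfun_upper_pt; auto.
  - apply ig_scal. apply int_Up; auto.
Qed.

Lemma h_lower k c v : 0 < c -> s * c < al -> is_RInt_gen (hfun k) F0 Finf v ->
  Rpower c (- s) * (LI al s c k - Rpower (be * c) gam * UI al sgm c k) <= v.
Proof.
  intros Hc Hsc Hv.
  assert (Hsg : sgm * c < al).
  { assert (sgm < s) by (unfold sgm; assert (H := gam_bounds); lra). nra. }
  apply (ig_le (fun x => Rpower c (- s) * (x^(S k) * exp (-(al*x)) * Lo s (c * x)
     - Rpower (be * c) gam * (x^(S k) * exp (-(al*x)) * Up sgm (c * x)))) (hfun k)); auto.
  - apply cpos_scal, cpos_minus. apply cpos_Lo; auto. apply cpos_scal, cpos_Up; auto.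
  - apply cpos_hfun.
  - intros; apply hfun_lower_pt; auto.
  - apply ig_scal.
    apply ig_ext with (fun x => x^(S k) * exp (-(al*x)) * Lo s (c * x)
     + (- Rpower (be * c) gam) * (x^(S k) * exp (-(al*x)) * Up sgm (c * x))).
    { intros; ring. }
    replace (LI al s c k - Rpower (be * c) gam * UI al sgm c k)
      with (LI al s c k + (- Rpower (be * c) gam) * UI al sgm c k) by ring.
    apply ig_plus. apply int_Lo; auto. apply ig_scal. apply int_Up; auto.
Qed.

End HB.

Lemma lim_invN : is_lim_seq (fun n => / INR (S n)) 0.
Proof.
  replace (Finite 0) with (Rbar_inv p_infty) by reflexivity.
  apply is_lim_seq_inv. 2: discriminate.
  apply (is_lim_seq_incr_1 INR p_infty). apply is_lim_seq_INR.
Qed.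

Lemma lim_const_invN c : is_lim_seq (fun n => c / INR (S n)) 0.
Proof.
  replace (Finite 0) with (Finite (c * 0)) by (f_equal; ring).
  apply is_lim_seq_mult'. apply is_lim_seq_const. apply lim_invN.
Qed.

Lemma lim_nN : is_lim_seq (fun n => INR n / INR (S n)) 1.
Proof.
  apply is_lim_seq_ext with (fun n => 1 - 1 / INR (S n)).
  { intros n. rewrite S_INR. field. assert (0 <= INR n) by apply pos_INR. lra. }
  replace (Finite 1) with (Finite (1 - 0)) by (f_equal; ring).
  apply is_lim_seq_minus'. apply is_lim_seq_const. apply lim_const_invN.
Qed.

Lemma exp_mul_pow u n : exp (INR n * u) = exp u ^ n.
Proof.
  induction n. simpl. rewrite Rmult_0_l, exp_0. reflexivity.
  rewrite S_INR. replace ((INR n + 1) * u) with (u + INR n * u) by ring.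
  rewrite exp_plus, IHn. simpl. ring.
Qed.

Lemma pow_exp_up w n : -1 <= w -> (1 + w)^n <= exp (INR n * w).
Proof.
  intros Hw. rewrite exp_mul_pow. apply pow_incr. split. lra. apply exp_ineq1_le.
Qed.

Lemma pow_exp_lo w n : -1 < w -> exp (INR n * (w / (1 + w))) <= (1 + w)^n.
Proof.
  intros Hw. rewrite exp_mul_pow. apply pow_incr. split. left; apply exp_pos.
  assert (H := exp_ineq1_le (- (w / (1 + w)))).
  rewrite exp_Ropp in H.
  assert (Hp := exp_pos (w / (1 + w))).
  assert (E : 1 + - (w / (1 + w)) = / (1 + w)) by (field; lra).
  rewrite E in H.
  apply Rinv_le_contravar in H. rewrite !Rinv_inv in H. exact H.
  apply Rinv_0_lt_compat; lra.
Qed.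

Lemma exp_cont x : continuity_pt exp x.
Proof. apply derivable_continuous_pt, derivable_pt_exp. Qed.

Lemma lim_SE sg p : 0 < p < 1 ->
  is_lim_seq (fun n => exp (- sg) * (/ (1 - sg / (INR (S n) * p)))^2
                        * (1 - p + p * / (1 - sg / (INR (S n) * p)))^n) 1.
Proof.
  intros Hp.
  set (a := fun n => sg / (INR (S n) * p)).
  assert (Ha : is_lim_seq a 0).
  { unfold a. apply is_lim_seq_ext with (fun n => (sg / p) / INR (S n)).
    { intros n. field. split. lra. apply not_0_INR; lia. }
    apply lim_const_invN. }
  assert (Hy : is_lim_seq (fun n => / (1 - a n)) 1).
  { replace (Finite 1) with (Rbar_inv (Finite (1 - 0))) by (simpl; f_equal; field).
    apply is_lim_seq_inv. apply is_lim_seq_minus'. apply is_lim_seq_const. auto.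
    simpl. intro H; injection H; lra. }
  set (w := fun n => p * (/ (1 - a n) - 1)).
  assert (Hw0 : is_lim_seq w 0).
  { replace (Finite 0) with (Finite (p * (1 - 1))) by (f_equal; ring).
    apply is_lim_seq_mult'. apply is_lim_seq_const. apply is_lim_seq_minus'; auto. apply is_lim_seq_const. }
  assert (Hev : eventually (fun n => Rabs (a n) < 1/2 /\ Rabs (w n) < 1/2)).
  { apply is_lim_seq_spec in Ha. apply is_lim_seq_spec in Hw0.
    assert (H12 : 0 < 1/2) by lra.
    destruct (Ha (mkposreal _ H12)) as [N1 HN1]. destruct (Hw0 (mkposreal _ H12)) as [N2 HN2].
    exists (N1 + N2)%nat. intros n Hn. simpl in *.
    specialize (HN1 n ltac:(lia)). specialize (HN2 n ltac:(lia)).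
    rewrite Rminus_0_r in HN1, HN2. auto. }
  assert (Hnw : is_lim_seq (fun n => INR n * w n) sg).
  { apply is_lim_seq_ext_loc with (fun n => (INR n / INR (S n)) * sg * / (1 - a n)).
    { destruct Hev as [N HN]. exists N. intros n Hn. specialize (HN n Hn). destruct HN as [H1 _].
      apply Rabs_def2 in H1. unfold w, a in *.
      assert (0 < INR (S n)) by (apply lt_0_INR; lia).
      assert (Hq : sg = (sg / (INR (S n) * p)) * (INR (S n) * p)) by (field; split; lra).
      assert (0 < INR (S n) * p) by nra.
      field. repeat split; try lra. nra. }
    replace (Finite sg) with (Finite (1 * sg * 1)) by (f_equal; ring).
    apply is_lim_seq_mult'. apply is_lim_seq_mult'. apply lim_nN. apply is_lim_seq_const. auto. }
  assert (Hnw2 : is_lim_seq (fun n => INR n * (w n / (1 + w n))) sg).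
  { apply is_lim_seq_ext with (fun n => (INR n * w n) * / (1 + w n)).
    { intros n. unfold Rdiv. ring. }
    replace (Finite sg) with (Finite (sg * / (1 + 0))) by (f_equal; field).
    apply is_lim_seq_mult'. auto.
    apply (is_lim_seq_inv _ (Finite (1 + 0))). apply is_lim_seq_plus'. apply is_lim_seq_const. auto.
    simpl. intro H; injection H; lra. }
  assert (Hpow : is_lim_seq (fun n => (1 + w n)^n) (exp sg)).
  { apply is_lim_seq_le_le_loc with (fun n => exp (INR n * (w n / (1 + w n)))) (fun n => exp (INR n * w n)).
    - destruct Hev as [N HN]. exists N. intros n Hn. destruct (HN n Hn) as [_ H2].
      apply Rabs_def2 in H2. split. apply pow_exp_lo; lra. apply pow_exp_up; lra.
    - apply (is_lim_seq_continuous exp). apply exp_cont. auto.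
    - apply (is_lim_seq_continuous exp). apply exp_cont. auto. }
  apply is_lim_seq_ext with (fun n => exp (- sg) * (/ (1 - a n))^2 * (1 + w n)^n).
  { intros n. unfold w, a. f_equal. f_equal. ring. }
  replace (Finite 1) with (Finite (exp (- sg) * 1^2 * exp sg)).
  2: { f_equal. rewrite pow1, Rmult_1_r, <- exp_plus. replace (- sg + sg) with 0 by ring. rewrite exp_0. ring. }
  apply is_lim_seq_mult'. apply is_lim_seq_mult'. apply is_lim_seq_const.
  apply (is_lim_seq_ext (fun n => / (1 - a n) * (/ (1 - a n) * 1))). intros; simpl; ring. replace (1^2) with (1 * (1 * 1)) by ring. apply is_lim_seq_mult'. auto. apply is_lim_seq_mult'. auto. apply is_lim_seq_const. auto.
Qed.

Lemma lim_SL sg p : 0 < p < 1 -> is_lim_seq (fun n => 1 + sg * (1 - p)^(S n)) 1.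
Proof.
  intros Hp.
  replace (Finite 1) with (Finite (1 + sg * 0)) by (f_equal; ring).
  apply is_lim_seq_plus'. apply is_lim_seq_const. apply is_lim_seq_mult'. apply is_lim_seq_const.
  apply (is_lim_seq_incr_1 (fun n => (1-p)^n)). apply is_lim_seq_geom. rewrite Rabs_pos_eq; lra.
Qed.

Lemma lim_Rpow0 (u : nat -> R) g : 0 < g -> (forall n, 0 < u n) -> is_lim_seq u 0 ->
  is_lim_seq (fun n => Rpower (u n) g) 0.
Proof.
  intros Hg Hu Hl. apply is_lim_seq_spec. apply is_lim_seq_spec in Hl.
  intros eps. set (d := Rpower eps (/ g)).
  assert (Hd : 0 < d) by apply exp_pos.
  destruct (Hl (mkposreal d Hd)) as [N HN]. exists N. intros n Hn.
  specialize (HN n Hn). simpl in HN. rewrite Rminus_0_r in *.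
  specialize (Hu n). rewrite Rabs_pos_eq in HN by lra.
  rewrite Rabs_pos_eq by (left; apply exp_pos).
  replace (pos eps) with (Rpower d g).
  2: { unfold d. rewrite Rpower_mult. rewrite Rinv_l by lra. rewrite Rpower_1; auto. destruct eps; auto. }
  unfold Rpower. apply exp_increasing. apply Rmult_lt_compat_l; auto. apply ln_increasing; auto.
Qed.

Lemma igu (f : R -> R) l : is_RInt_gen f F0 Finf l -> RInt_gen f F0 Finf = l.
Proof. intros H. apply (is_RInt_gen_unique f l H). Qed.

Lemma exp_neg_le_inv u : 0 < u -> exp (- u) <= / u.
Proof.
  intros Hu. rewrite exp_Ropp. apply Rinv_le_contravar; auto.
  assert (H := exp_ineq1_le u). lra.
Qed.

Lemma besselK_pos th xb : 0 < th -> 0 < xb -> 0 < besselK th xb.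
Proof.
  intros Hth Hxb.
  set (f := fun t => / 2 * Rpower t (th - 1) * exp (- xb * (t + / t) / 2)).
  assert (Hc : cpos f).
  { intros t Ht. apply (@ex_derive_continuous R_AbsRing R_NormedModule).
    unfold f, Rpower. auto_derive. repeat split; lra. }
  assert (Hpos : forall t, 0 < t -> 0 < f t).
  { intros t Ht. unfold f. apply Rmult_lt_0_compat. apply Rmult_lt_0_compat. lra. apply exp_pos. apply exp_pos. }
  destruct (h_exists (th - 1) (xb / 2) (xb / 4) ltac:(lra) ltac:(lra) ltac:(lra) 0) as [v [Hv Hv0]].
  destruct (ig_dom f (fun t => (2 / xb) * hfun (th - 1) (xb / 2) (xb / 4) 0 t) ((2 / xb) * v)) as [L [HL HL0]].
  - auto.
  - apply cpos_scal. apply cpos_hfun; lra.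
  - intros t Ht. split. left; auto.
    unfold f, hfun. simpl pow.
    assert (E : exp (- xb * (t + / t) / 2) = exp (- (xb / 2 * t)) * exp (- (xb / 4 / t)) * exp (- (xb / (4 * t)))).
    { rewrite <- !exp_plus. f_equal. field. lra. }
    rewrite E.
    assert (H1 := exp_neg_le_inv (xb / (4 * t)) ltac:(apply Rdiv_lt_0_compat; lra)).
    assert (0 < Rpower t (th - 1)) by apply exp_pos.
    assert (0 < exp (- (xb / 2 * t))) by apply exp_pos.
    assert (0 < exp (- (xb / 4 / t))) by apply exp_pos.
    assert (0 < exp (- (xb / (4 * t)))) by apply exp_pos.
    replace (2 / xb * (t * 1 * exp (- (xb / 2 * t)) * (Rpower t (th - 1) * exp (- (xb / 4 / t)))))
      with (/ 2 * Rpower t (th - 1) * (exp (- (xb / 2 * t)) * exp (- (xb / 4 / t))) * / (xb / (4 * t)))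
      by (field; lra).
    replace (/ 2 * Rpower t (th - 1) * (exp (- (xb / 2 * t)) * exp (- (xb / 4 / t)) * exp (- (xb / (4 * t)))))
      with (/ 2 * Rpower t (th - 1) * (exp (- (xb / 2 * t)) * exp (- (xb / 4 / t))) * exp (- (xb / (4 * t))))
      by ring.
    match goal with |- ?Z * _ <= ?Z * _ => assert (0 <= Z) by (apply Rmult_le_pos; [apply Rmult_le_pos|]; nra); apply (Rmult_le_compat_l Z); auto end.
  - apply ig_scal. auto.
  - unfold besselK, int_0_inf. fold f. rewrite (igu f L HL).
    apply Rlt_le_trans with (RInt f 1 2).
    + apply RInt_gt_0. lra. intros; apply Hpos; lra. intros; apply Hc; lra.
    + apply RInt_le_gen; auto. intros; left; auto. lra. lra.
Qed.

Section Main.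
Variables psi chi th q : R.
Hypothesis Hpsi : 0 < psi.
Hypothesis Hchi : 0 < chi.
Hypothesis Hth : 0 < th.
Hypothesis Hq : 0 < q < 1.

Let s := th - 1.
Let al := 1 + psi / 2.
Let be := chi / 2.
Let K := besselK th (sqrt (psi * chi)).
Let kap := Rpower (psi / chi) (th / 2) / (2 * K).
Let v (k : nat) := RInt_gen (hfun s al be k) F0 Finf.
Let r := 1 - q.
Let x := q / al.
Let p := x / (x + r).

Lemma Hs : -1 < s. Proof. unfold s; lra. Qed.
Lemma Hal : 0 < al. Proof. unfold al; lra. Qed.
Lemma Hbe : 0 < be. Proof. unfold be; lra. Qed.
Lemma HK : 0 < K.
Proof. apply besselK_pos; auto. apply sqrt_lt_R0. nra. Qed.
Lemma Hx : 0 < x. Proof. unfold x. apply Rdiv_lt_0_compat. lra. apply Hal. Qed.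
Lemma Hp : 0 < p < 1.
Proof. unfold p, r. assert (H := Hx). split. apply Rdiv_lt_0_compat; lra.
  apply Rmult_lt_reg_r with (x + (1 - q)). lra. field_simplify; lra. Qed.

Lemma Hv k : is_RInt_gen (hfun s al be k) F0 Finf (v k).
Proof.
  destruct (h_exists s al be Hs Hal Hbe k) as [w [Hw _]].
  unfold v. rewrite (igu _ _ Hw). auto.
Qed.

Lemma mp_eq k : mixed_poisson_pmf psi chi th (S k) = kap / INR (fact (S k)) * v k.
Proof.
  unfold mixed_poisson_pmf, int_0_inf. apply igu.
  apply ig_ext with (fun l => kap / INR (fact (S k)) * hfun s al be k l).
  2: { apply ig_scal. apply Hv. }
  intros l Hl. unfold hfun, gig_density, kap, K, s, al, be.
  assert (Heq : exp (- (chi / l + psi * l) / 2) * exp (- l) = exp (- ((1 + psi / 2) * l)) * exp (- (chi / 2 / l))).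
  { rewrite <- !exp_plus. f_equal. field. lra. }
  set (E1 := exp (- (chi / l + psi * l) / 2)) in *.
  set (E2 := exp (- l)) in *.
  set (A := exp (- ((1 + psi / 2) * l))) in *.
  set (B := exp (- (chi / 2 / l))) in *.
  assert (HK' := HK). unfold K in HK'.
  set (KK := besselK th (sqrt (psi * chi))) in *.
  set (RR := Rpower l (th - 1)).
  set (PP := Rpower (psi / chi) (th / 2)).
  assert (Hf := INR_fact_neq_0 (S k)).
  symmetry. transitivity (PP / (2 * KK) * RR * l ^ S k / INR (fact (S k)) * (E1 * E2)).
  { field. split; lra. }
  rewrite Heq. field. split; lra.
Qed.


Definition w n k := bn n k * p^k * (1 - p)^(n - k).
Definition Ak k := al^(S (S k)) / INR (fact (S k)).
Definition cn n := al / (INR (S n) * p).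
Definition Phi n := Rpower (cn n) s * sum_f_R0 (fun k => w n k * Ak k * v k) n.

Lemma Hcn n : 0 < cn n.
Proof. unfold cn. assert (H := Hp). assert (0 < INR (S n)) by (apply lt_0_INR; lia).
  apply Rdiv_lt_0_compat. apply Hal. nra. Qed.

Lemma comp_eq n : compound_pmf psi chi th q (S n) =
  kap * q * (x + r)^n / al^2 * Rpower (cn n) (- s) * Phi n.
Proof.
  rewrite compound_sum. unfold Phi.
  replace (kap * q * (x + r) ^ n / al ^ 2 * Rpower (cn n) (- s) *
    (Rpower (cn n) s * sum_f_R0 (fun k : nat => w n k * Ak k * v k) n))
    with (kap * q * (x + r) ^ n / al ^ 2 * sum_f_R0 (fun k : nat => w n k * Ak k * v k) n).
  2: { assert (E : Rpower (cn n) (- s) * Rpower (cn n) s = 1).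
       { rewrite <- Rpower_plus. replace (- s + s) with 0 by ring. apply Rpower_O. apply Hcn. }
       transitivity (kap * q * (x + r) ^ n / al ^ 2 * sum_f_R0 (fun k : nat => w n k * Ak k * v k) n
                     * (Rpower (cn n) (- s) * Rpower (cn n) s)). rewrite E; ring. ring. }
  rewrite scal_sum. apply sum_eq. intros k Hk.
  rewrite mp_eq. unfold w, Ak.
  assert (Hal' := Hal). assert (Hx' := Hx). assert (Hp' := Hp).
  assert (Hxr : 0 < x + r) by (unfold r; lra).
  assert (E1 : q ^ S k = q * al^k * (p^k * (x + r)^k)).
  { rewrite <- Rpow_mult_distr. replace (p * (x + r)) with x by (unfold p; field; lra).
    rewrite Rmult_assoc, <- Rpow_mult_distr. unfold x. replace (al * (q / al)) with q by (field; lra). simpl. ring. }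
  assert (E2 : (1 - q)^(n - k) = (1 - p)^(n - k) * (x + r)^(n - k)).
  { rewrite <- Rpow_mult_distr. f_equal. unfold p, r. field. unfold r in Hxr. lra. }
  assert (E3 : (x + r)^n = (x + r)^k * (x + r)^(n - k)).
  { rewrite <- pow_add. f_equal. lia. }
  rewrite E1, E2, E3.
  assert (Hf := INR_fact_neq_0 (S k)).
  simpl pow. field. split; auto. lra.
Qed.

Lemma Rpower_div a b y : 0 < a -> 0 < b -> Rpower (a / b) y = Rpower a y * Rpower b (- y).
Proof.
  intros Ha Hb. unfold Rpower. rewrite <- exp_plus. f_equal. unfold Rdiv.
  rewrite ln_mult, ln_Rinv by (try apply Rinv_0_lt_compat; lra). ring.
Qed.

Lemma ratio_eq n :
  compound_pmf psi chi th q (S n) /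
  (Rpower psi (th / 2) / besselK th (sqrt (chi * psi)) * Rpower chi (- th / 2)
   * Rpower ((2 + psi) * (2 + psi * (1 - q)) / (2 * q)) (- th)
   * Rpower (2 * INR (S n)) (th - 1) * / (/ (1 - psi * q / (2 + psi))) ^ (S n)) = Phi n.
Proof.
  rewrite comp_eq.
  set (Dd := (2 + psi) * (2 + psi * (1 - q)) / (2 * q)).
  assert (HD : 0 < Dd).
  { unfold Dd. apply Rdiv_lt_0_compat. apply Rmult_lt_0_compat; nra. lra. }
  assert (Hal' := Hal). assert (Hx' := Hx). assert (Hp' := Hp). assert (HK' := HK).
  assert (Hxr : 0 < x + r) by (unfold r; lra).
  assert (Hinv : p / (2 * al) = / Dd).
  { unfold Dd, p, x, r, al. field. repeat split; try nra. }
  assert (HxR : x + r = 1 - psi * q / (2 + psi)).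
  { unfold x, r, al. field. lra. }
  assert (HN : 0 < INR (S n)) by (apply lt_0_INR; lia).
  assert (E1 : Rpower psi (th / 2) / besselK th (sqrt (chi * psi)) * Rpower chi (- th / 2) = 2 * kap).
  { unfold kap, K. rewrite Rpower_div by lra. rewrite (Rmult_comm chi psi).
    replace (- th / 2) with (- (th / 2)) by field. field. apply Rgt_not_eq; exact HK'. }
  assert (E2 : / (/ (1 - psi * q / (2 + psi))) ^ (S n) = (x + r) ^ (S n)).
  { rewrite <- HxR. rewrite pow_inv, Rinv_inv. reflexivity. }
  assert (E3 : Rpower (cn n) (- s) = Rpower (2 * INR (S n)) s * Rpower (/ Dd) s).
  { unfold cn, Rpower. rewrite <- exp_plus. f_equal. rewrite <- Hinv.
    assert (L1 : ln (al / (INR (S n) * p)) = ln al - ln (INR (S n)) - ln p).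
    { unfold Rdiv. rewrite ln_mult by (try apply Rinv_0_lt_compat; nra).
      rewrite ln_Rinv by nra. rewrite ln_mult by nra. ring. }
    assert (L2 : ln (2 * INR (S n)) = ln 2 + ln (INR (S n))) by (rewrite ln_mult; lra).
    assert (L3 : ln (p / (2 * al)) = ln p - ln 2 - ln al).
    { unfold Rdiv. rewrite ln_mult by (try apply Rinv_0_lt_compat; nra).
      rewrite ln_Rinv by nra. rewrite ln_mult by nra. ring. }
    rewrite L1, L2, L3. ring. }
  assert (E4 : Rpower Dd (- th) = Rpower (/ Dd) s * / Dd).
  { unfold Rpower, s. rewrite ln_Rinv by lra.
    replace (/ Dd) with (exp (- ln Dd)) by (rewrite exp_Ropp, exp_ln; lra).
    rewrite <- exp_plus. f_equal. ring. }
  fold s. rewrite E1, E2, E4.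
  assert (E5 : q / al ^ 2 = 2 * / Dd * (x + r)).
  { rewrite <- Hinv. unfold p, x. field. unfold r; split; nra. }
  rewrite E3.
  assert (Hpos : 0 < Rpower (2 * INR (S n)) s * Rpower (/ Dd) s) by (apply Rmult_lt_0_compat; apply exp_pos).
  assert (Hkap : 0 < kap) by (unfold kap; apply Rdiv_lt_0_compat; [apply exp_pos| lra]).
  replace (kap * q * (x + r) ^ n / al ^ 2 * (Rpower (2 * INR (S n)) s * Rpower (/ Dd) s) * Phi n)
    with (kap * (x + r) ^ n * (q / al ^ 2) * (Rpower (2 * INR (S n)) s * Rpower (/ Dd) s) * Phi n)
    by (field; lra).
  rewrite E5. simpl pow.
  field. repeat split; try lra. apply pow_nonzero; lra. apply Rgt_not_eq, exp_pos. apply Rgt_not_eq, exp_pos.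
Qed.

Definition yn sg n := / (1 - sg / (INR (S n) * p)).
Definition SEn sg n := exp (- sg) * (yn sg n)^2 * (1 - p + p * yn sg n)^n.
Definition SLn sg n := 1 + sg * (1 - p)^(S n).
Definition SU sg n := if Rle_dec 0 sg then SEn sg n else SLn sg n.
Definition SLo sg n := if Rle_dec 0 sg then SLn sg n else SEn sg n.

Lemma sum_scal_l c (f : nat -> R) N : sum_f_R0 (fun k => c * f k) N = c * sum_f_R0 f N.
Proof. rewrite scal_sum. apply sum_eq. intros; ring. Qed.

Lemma sum_w n : sum_f_R0 (w n) n = 1.
Proof.
  unfold w. rewrite (bn_binomial p (1 - p) n). replace (p + (1 - p)) with 1 by ring. apply pow1.
Qed.

Lemma sum_IL sg n : sum_f_R0 (fun k => w n k * (Ak k * IL al sg (cn n) k)) n = SLn sg n.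
Proof.
  assert (Hp' := Hp). assert (Hal' := Hal).
  assert (HN : 0 < INR (S n)) by (apply lt_0_INR; lia).
  transitivity (sum_f_R0 (fun k => (1 + sg) * w n k + (- sg * INR (S n) * p) * (w n k / INR (S k))) n).
  { apply sum_eq. intros k Hk. unfold Ak, IL, cn.
    change (fact (S k)) with (S k * fact k)%nat. rewrite mult_INR.
    assert (HS : 0 < INR (S k)) by (apply lt_0_INR; lia).
    assert (Hf := INR_fact_neq_0 k).
    simpl pow. field. repeat split; try lra. apply pow_nonzero; lra. }
  rewrite sum_plus. rewrite !sum_scal_l.
  rewrite sum_w.
  replace (sum_f_R0 (fun k => w n k / INR (S k)) n) with ((1 - (1 - p)^(S n)) / (INR (S n) * p)).
  2: { rewrite <- bsum_inv by lra. apply sum_eq. intros; unfold w; reflexivity. }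
  unfold SLn. field. lra.
Qed.

Lemma sum_IE sg n : sg * cn n < al ->
  sum_f_R0 (fun k => w n k * (Ak k * IE al sg (cn n) k)) n = SEn sg n.
Proof.
  intros Hsc. assert (Hp' := Hp). assert (Hal' := Hal).
  assert (HN : 0 < INR (S n)) by (apply lt_0_INR; lia).
  assert (Hy : al - sg * cn n = al * (1 - sg / (INR (S n) * p))).
  { unfold cn. field. lra. }
  assert (Hy2 : 0 < 1 - sg / (INR (S n) * p)).
  { assert (0 < al - sg * cn n) by lra. rewrite Hy in H. nra. }
  unfold SEn. rewrite Rmult_assoc, <- bsum_gen.
  rewrite scal_sum. apply sum_eq. intros k Hk. unfold w, Ak, IE, yn. rewrite Hy.
  rewrite Rpow_mult_distr. rewrite pow_inv.
  assert (Hf := INR_fact_neq_0 (S k)).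
  field. repeat split; try lra; apply pow_nonzero; lra.
Qed.

Lemma sum_UI sg n : sg * cn n < al ->
  sum_f_R0 (fun k => w n k * (Ak k * UI al sg (cn n) k)) n = SU sg n.
Proof.
  intros H. unfold UI, SU. destruct (Rle_dec 0 sg). apply sum_IE; auto. apply sum_IL.
Qed.

Lemma sum_LI sg n : sg * cn n < al ->
  sum_f_R0 (fun k => w n k * (Ak k * LI al sg (cn n) k)) n = SLo sg n.
Proof.
  intros H. unfold LI, SLo. destruct (Rle_dec 0 sg). apply sum_IL. apply sum_IE; auto.
Qed.

Lemma w_pos n k : 0 <= w n k.
Proof. unfold w. assert (H := Hp). apply Rmult_le_pos. apply Rmult_le_pos. apply bn_pos.
  apply pow_le; lra. apply pow_le; lra. Qed.

Lemma Ak_pos k : 0 < Ak k.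
Proof. unfold Ak. apply Rdiv_lt_0_compat. apply pow_lt, Hal. apply lt_0_INR, lt_O_fact. Qed.

Lemma Phi_upper n : s * cn n < al -> Phi n <= SU s n.
Proof.
  intros Hsc. rewrite <- sum_UI by auto. unfold Phi.
  rewrite scal_sum. apply sum_Rle. intros k Hk.
  assert (H := h_upper s al be Hs Hal Hbe k (cn n) (v k) (Hcn n) Hsc (Hv k)).
  assert (Hc := Hcn n). assert (Hw := w_pos n k). assert (HA := Ak_pos k).
  assert (Hr : 0 < Rpower (cn n) s) by apply exp_pos.
  assert (E : Rpower (cn n) s * Rpower (cn n) (- s) = 1).
  { rewrite <- Rpower_plus. replace (s + - s) with 0 by ring. apply Rpower_O; auto. }
  apply Rle_trans with (w n k * Ak k * (Rpower (cn n) s * (Rpower (cn n) (- s) * UI al s (cn n) k))).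
  - replace (w n k * Ak k * v k * Rpower (cn n) s) with (w n k * Ak k * (Rpower (cn n) s * v k)) by ring.
    apply Rmult_le_compat_l. nra. apply Rmult_le_compat_l; lra.
  - right. transitivity (w n k * Ak k * ((Rpower (cn n) s * Rpower (cn n) (- s)) * UI al s (cn n) k)).
    ring. rewrite E. ring.
Qed.

Lemma Phi_lower n : s * cn n < al ->
  SLo s n - Rpower (be * cn n) (gam s) * SU (sgm s) n <= Phi n.
Proof.
  intros Hsc.
  assert (Hsg : sgm s * cn n < al).
  { assert (sgm s < s) by (unfold sgm; assert (H0 := gam_bounds s Hs); lra). assert (H1 := Hcn n). nra. }
  rewrite <- sum_UI by auto. rewrite <- sum_LI by auto.
  rewrite scal_sum. rewrite <- minus_sum. unfold Phi.
  rewrite scal_sum. apply sum_Rle. intros k Hk.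
  assert (H := h_lower s al be Hs Hal Hbe k (cn n) (v k) (Hcn n) Hsc (Hv k)).
  assert (Hc := Hcn n). assert (Hw := w_pos n k). assert (HA := Ak_pos k).
  assert (Hr : 0 < Rpower (cn n) s) by apply exp_pos.
  assert (E : Rpower (cn n) s * Rpower (cn n) (- s) = 1).
  { rewrite <- Rpower_plus. replace (s + - s) with 0 by ring. apply Rpower_O; auto. }
  set (Z := LI al s (cn n) k - Rpower (be * cn n) (gam s) * UI al (sgm s) (cn n) k) in *.
  apply Rle_trans with (w n k * Ak k * (Rpower (cn n) s * (Rpower (cn n) (- s) * Z))).
  - right. transitivity (w n k * Ak k * ((Rpower (cn n) s * Rpower (cn n) (- s)) * Z)).
    rewrite E. unfold Z. ring. ring.
  - replace (w n k * Ak k * v k * Rpower (cn n) s) with (w n k * Ak k * (Rpower (cn n) s * v k)) by ring.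
    apply Rmult_le_compat_l. nra. apply Rmult_le_compat_l; lra.
Qed.

Lemma lim_SU sg : is_lim_seq (SU sg) 1.
Proof.
  unfold SU. destruct (Rle_dec 0 sg).
  - unfold SEn, yn. apply lim_SE. apply Hp.
  - unfold SLn. apply lim_SL. apply Hp.
Qed.

Lemma lim_SLo sg : is_lim_seq (SLo sg) 1.
Proof.
  unfold SLo. destruct (Rle_dec 0 sg).
  - unfold SLn. apply lim_SL. apply Hp.
  - unfold SEn, yn. apply lim_SE. apply Hp.
Qed.

Lemma Phi_lim : is_lim_seq Phi 1.
Proof.
  assert (Hp' := Hp). assert (Hal' := Hal). assert (Hbe' := Hbe).
  assert (Hev : eventually (fun n => s * cn n < al)).
  { assert (H := is_lim_seq_INR). apply is_lim_seq_spec in H.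
    destruct (H (Rabs s / p)) as [N HN]. exists N. intros n Hn.
    specialize (HN (S n) ltac:(lia)).
    unfold cn. assert (HS : 0 < INR (S n)) by (apply lt_0_INR; lia).
    assert (Hb : s < INR (S n) * p).
    { assert (s <= Rabs s) by apply Rle_abs.
      assert (Rabs s < INR (S n) * p).
      { apply Rmult_lt_reg_r with (/ p). apply Rinv_0_lt_compat; lra.
        replace (INR (S n) * p * / p) with (INR (S n)) by (field; lra). exact HN. }
      lra. }
    replace (s * (al / (INR (S n) * p))) with (al * (s / (INR (S n) * p))) by (field; nra).
    assert (s / (INR (S n) * p) < 1).
    { apply Rmult_lt_reg_r with (INR (S n) * p). nra. field_simplify; nra. }
    nra. }
  assert (Hu : is_lim_seq (fun n => Rpower (be * cn n) (gam s)) 0).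
  { apply lim_Rpow0. apply gam_bounds, Hs.
    intros n. apply Rmult_lt_0_compat. lra. apply Hcn.
    apply is_lim_seq_ext with (fun n => (be * al / p) / INR (S n)).
    { intros n. unfold cn. field. split. lra. apply not_0_INR; lia. }
    apply lim_const_invN. }
  apply is_lim_seq_le_le_loc with
    (fun n => SLo s n - Rpower (be * cn n) (gam s) * SU (sgm s) n) (SU s).
  - destruct Hev as [N HN]. exists N. intros n Hn. split.
    apply Phi_lower; auto. apply Phi_upper; auto.
  - replace (Finite 1) with (Finite (1 - 0 * 1)) by (f_equal; ring).
    apply is_lim_seq_minus'. apply lim_SLo. apply is_lim_seq_mult'. auto. apply lim_SU.
  - apply lim_SU.
Qed.
End Main.

Theorem proposition3 (psi chi th q : R) :
  0 < psi -> 0 < chi -> 0 < th -> 0 < q < 1 ->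
  let C := Rpower psi (th / 2) / besselK th (sqrt (chi * psi)) in
  let z1 := / (1 - psi * q / (2 + psi)) in
  let D := (2 + psi) * (2 + psi * (1 - q)) / (2 * q) in
  is_lim_seq
    (fun n : nat =>
       compound_pmf psi chi th q n /
       (C * Rpower chi (- th / 2) * Rpower D (- th)
          * Rpower (2 * INR n) (th - 1) * / z1 ^ n))
    1.
Proof.
  intros Hpsi Hchi Hth Hq C z1 D.
  apply is_lim_seq_incr_1.
  apply is_lim_seq_ext with (Phi psi chi th q).
  { intros n. symmetry. unfold C, z1, D. apply ratio_eq; auto. }
  apply Phi_lim; auto.
Qed.
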